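(* Let $(S,+)$ be an infinite semigroup with no idempotent element which is left weakly cancellative and right cancellative, and let $\langle x_n\rangle_{n=1}^\infty$ be a sequence in $S$. Then there exists a sum subsystem $\langle y_n\rangle_{n=1}^\infty$ of $\langle x_n\rangle_{n=1}^\infty$ which satisfies uniqueness of finite sums.
   Context: $S$ is left weakly cancellative if for all $a,b\in S$ the set $\{x: a+x=b\}$ is finite; $S$ is right cancellative if for all $a,b$ the set $\{x: x+a=b\}$ has at most one element; $e$ is idempotent if $e+e=e$. $\mathcal{P}_f(\mathbb{N})$ is the set of nonempty finite subsets of $\mathbb{N}=\{1,2,\dots\}$, and $\sum_{n\in H}x_n$ denotes the sum in increasing order of indices. A sequence $\langle y_n\rangle_{n=1}^\infty$ is a sum subsystem of $\langle x_n\rangle_{n=1}^\infty$ if there are $H_n\in\mathcal{P}_f(\mathbb{N})$ with $\max H_n<\min H_{n+1}$ and $y_n=\sum_{t\in H_n}x_t$ for all $n$. A sequence $\langle y_n\rangle_{n=1}^\infty$ satisfies uniqueness of finite sums if for all distinct $H_1,H_2\in\mathcal{P}_f(\mathbb{N})$, $\sum_{n\in H_1}y_n\neq\sum_{n\in H_2}y_n$. *)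

(* Defs.v *)
(* Sequences indexed by nat (index 0 plays the role of 1). *)
From Stdlib Require Import List Arith Sorted.
Import ListNotations.

Definition associative {T : Type} (op : T -> T -> T) : Prop :=
  forall a b c, op a (op b c) = op (op a b) c.

Definition infinite_type (T : Type) : Prop :=
  ~ exists l : list T, forall x : T, In x l.

Definition no_idempotent {T : Type} (op : T -> T -> T) : Prop :=
  forall e : T, op e e <> e.

Definition left_weakly_cancellative {T : Type} (op : T -> T -> T) : Prop :=
  forall a b : T, exists l : list T, forall x, op a x = b -> In x l.

Definition right_cancellative {T : Type} (op : T -> T -> T) : Prop :=
  forall a b x y : T, op x a = b -> op y a = b -> x = y.

(* Nonempty finite subsets of nat, represented canonically as nonempty
   strictly increasing lists (so distinct sets = distinct lists). *)
Definition fin_index_set (H : list nat) : Prop :=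
  H <> [] /\ StronglySorted lt H.

Definition fsum {T : Type} (op : T -> T -> T) (x : nat -> T) (H : list nat) : option T :=
  match H with
  | [] => None
  | h :: t => Some (fold_left (fun acc n => op acc (x n)) t (x h))
  end.

Definition sum_subsystem {T : Type} (op : T -> T -> T) (x y : nat -> T) : Prop :=
  exists Hs : nat -> list nat,
    (forall n, fin_index_set (Hs n)) /\
    (forall n, last (Hs n) 0 < hd 0 (Hs (S n))) /\
    (forall n, fsum op x (Hs n) = Some (y n)).

Definition uniqueness_of_finite_sums {T : Type} (op : T -> T -> T) (y : nat -> T) : Prop :=
  forall H1 H2, fin_index_set H1 -> fin_index_set H2 -> H1 <> H2 ->
    fsum op y H1 <> fsum op y H2.

(* Main.v *)
Require Import Defs.
From Stdlib Require Import List Arith Sorted Lia Classical ClassicalEpsilon.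
Import ListNotations.

Lemma pigeon {A : Type} (L : list A) : forall f : nat -> A,
  (forall n, In (f n) L) -> exists i j, i < j /\ f i = f j.
Proof.
  induction L as [|a L IH]; intros f Hf.
  - destruct (Hf 0).
  - destruct (classic (exists n0, f n0 = a)) as [[n0 Hn0]|Hno].
    + destruct (classic (exists j, n0 < j /\ f j = a)) as [[j [Hj Hfj]]|Hno2].
      * exists n0, j; split; [lia|congruence].
      * destruct (IH (fun n => f (S n0 + n))) as [i [j [Hij He]]].
        { intros n. destruct (Hf (S n0 + n)) as [E|E]; [|exact E].
          exfalso; apply Hno2; exists (S n0 + n); split; [lia|auto]. }
        exists (S n0 + i), (S n0 + j); split; [lia|exact He].
    + destruct (IH f) as [i [j H]]; [|eauto].
      intros n; destruct (Hf n) as [E|E]; [|exact E].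
      exfalso; apply Hno; exists n; auto.
Qed.

Lemma sorted_last : forall H e, StronglySorted lt (H ++ [e]) ->
  StronglySorted lt H /\ Forall (fun t => t < e) H.
Proof.
  induction H as [|a H IH]; simpl; intros e Hs.
  - split; constructor.
  - inversion Hs as [|? ? Hs' HF]; subst.
    destruct (IH e Hs') as [H1 H2].
    apply Forall_app in HF as [HF1 HF2].
    inversion HF2; subst.
    split; constructor; auto.
Qed.

Lemma seq_sorted : forall n k, StronglySorted lt (seq k n).
Proof.
  induction n; intros k; simpl; constructor; auto.
  apply Forall_forall; intros t Ht; apply in_seq in Ht; lia.
Qed.

Lemma fsum_app_last {T : Type} (op : T -> T -> T) (x : nat -> T) :
  forall H v e, fsum op x H = Some v -> fsum op x (H ++ [e]) = Some (op v (x e)).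
Proof.
  intros [|h t] v e E; simpl in *; [discriminate|].
  inversion E; subst. rewrite fold_left_app. reflexivity.
Qed.

Section Constr.
Variable T : Type.
Variable op : T -> T -> T.
Variable x : nat -> T.
Variable lwc : T -> T -> list T.
Variable ch : nat -> list T -> nat.
Hypothesis Hassoc : associative op.
Hypothesis Hnoid : no_idempotent op.
Hypothesis Hrc : right_cancellative op.
Hypothesis Hlwc : forall a b z, op a z = b -> In z (lwc a b).

Lemma noA : forall a z, op a z = z -> False.
Proof.
  intros a z E. apply (Hnoid a).
  apply (Hrc z z (op a a) a); auto.
  rewrite <- Hassoc, E, E; reflexivity.
Qed.

Fixpoint mlt (w : T) (n : nat) : T :=
  match n with 0 => w | S n => op (mlt w n) w end.

Lemma mlt_add : forall w d i, mlt w (S (d + i)) = op (mlt w d) (mlt w i).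
Proof.
  intros w d i; induction i.
  - rewrite Nat.add_0_r; reflexivity.
  - rewrite Nat.add_succ_r. simpl in *. rewrite IHi, Hassoc. reflexivity.
Qed.

Lemma noB : forall z w, op z w = z -> False.
Proof.
  intros z w E.
  assert (Hm : forall n, op z (mlt w n) = z).
  { induction n; simpl; auto. rewrite Hassoc, IHn; auto. }
  destruct (pigeon (lwc z z) (mlt w)) as [i [j [Hij He]]].
  { intros n; apply Hlwc, Hm. }
  replace j with (S ((j - i - 1) + i)) in He by lia.
  rewrite mlt_add in He. apply (noA _ _ (eq_sym He)).
Qed.

Fixpoint isum (k n : nat) : T :=
  match n with 0 => x k | S n' => op (isum k n') (x (k + S n')) end.

Lemma isum_fsum : forall k n, fsum op x (seq k (S n)) = Some (isum k n).
Proof.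
  intros k n; induction n.
  - reflexivity.
  - rewrite (seq_S (S n) k).
    change (isum k (S n)) with (op (isum k n) (x (k + S n))).
    apply fsum_app_last. exact IHn.
Qed.

Lemma isum_ext : forall k i d, exists w, isum k (S (i + d)) = op (isum k i) w.
Proof.
  intros k i d; induction d.
  - rewrite Nat.add_0_r. eexists; reflexivity.
  - destruct IHd as [w Hw]. exists (op w (x (k + S (S (i + d))))).
    rewrite Nat.add_succ_r. simpl. simpl in Hw. rewrite Hw, Hassoc. reflexivity.
Qed.

Lemma ch_exists : forall k (L : list T), exists n, ~ In (isum k n) L.
Proof.
  intros k L. apply NNPP; intro Hn.
  destruct (pigeon L (isum k)) as [i [j [Hij He]]].
  { intros n. apply NNPP; intro Hn'; apply Hn; exists n; auto. }
  destruct (isum_ext k i (j - i - 1)) as [w Hw].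
  replace (S (i + (j - i - 1))) with j in Hw by lia.
  apply (noB (isum k i) w). congruence.
Qed.

Hypothesis Hch : forall k L, ~ In (isum k (ch k L)) L.

Definition FF (L : list T) : list T :=
  L ++ flat_map (fun a => flat_map (fun b => lwc a b) L) L.

Fixpoint st (m : nat) : nat * list T :=
  match m with
  | 0 => (0, [])
  | S m' => let (k, L) := st m' in
            let n := ch k (FF L) in
            let v := isum k n in
            (k + n + 1, L ++ v :: map (fun a => op a v) L)
  end.

Definition kk m := fst (st m).
Definition SS m := snd (st m).
Definition nn m := ch (kk m) (FF (SS m)).
Definition y m := isum (kk m) (nn m).

Lemma st_S : forall m, st (S m) =
  (kk m + nn m + 1, SS m ++ y m :: map (fun a => op a (y m)) (SS m)).
Proof.
  intros m. unfold y, nn, kk, SS. simpl. destruct (st m); reflexivity.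
Qed.

Lemma SS_S : forall m, SS (S m) = SS m ++ y m :: map (fun a => op a (y m)) (SS m).
Proof. intros m; unfold SS at 1; rewrite st_S; reflexivity. Qed.

Lemma kk_S : forall m, kk (S m) = kk m + nn m + 1.
Proof. intros m; unfold kk at 1; rewrite st_S; reflexivity. Qed.

Lemma SS_mono : forall a b, a <= b -> incl (SS a) (SS b).
Proof.
  intros a b Hab. replace b with (a + (b - a)) by lia.
  generalize (b - a) as d. induction d.
  - rewrite Nat.add_0_r; apply incl_refl.
  - rewrite Nat.add_succ_r, SS_S. intros t Ht. apply in_or_app; left; auto.
Qed.

Lemma sum_in_SS : forall H m, StronglySorted lt H -> H <> [] ->
  Forall (fun t => t < m) H -> exists v, fsum op y H = Some v /\ In v (SS m).
Proof.
  induction H as [|e H' IH] using rev_ind; intros m Hs Hne HF; [congruence|].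
  destruct (sorted_last _ _ Hs) as [Hs' HF'].
  apply Forall_app in HF as [_ HFe]. inversion HFe; subst.
  destruct H' as [|h t].
  - exists (y e); split; [reflexivity|].
    apply (SS_mono (S e)); [lia|]. rewrite SS_S. apply in_or_app; right; left; auto.
  - destruct (IH e Hs' ltac:(discriminate) HF') as [v [Hv Hin]].
    exists (op v (y e)); split; [apply fsum_app_last; auto|].
    apply (SS_mono (S e)); [lia|]. rewrite SS_S. apply in_or_app; right; right.
    apply (in_map (fun a => op a (y e))); auto.
Qed.

Lemma y_notin : forall e, ~ In (y e) (FF (SS e)).
Proof. intros e; apply Hch. Qed.

Lemma lt_case : forall H1 H2' e, fin_index_set H1 -> Forall (fun t => t < e) H1 ->
  StronglySorted lt H2' -> Forall (fun t => t < e) H2' ->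
  fsum op y H1 <> fsum op y (H2' ++ [e]).
Proof.
  intros H1 H2' e [Hne Hs] HF Hs2 HF2 Heq.
  destruct (sum_in_SS H1 e Hs Hne HF) as [b [Hb Hbin]].
  rewrite Hb in Heq.
  destruct H2' as [|h t].
  - simpl in Heq. inversion Heq; subst. apply (y_notin e).
    apply in_or_app; left; auto.
  - destruct (sum_in_SS (h :: t) e Hs2 ltac:(discriminate) HF2) as [a [Ha Hain]].
    rewrite (fsum_app_last _ _ _ _ e Ha) in Heq. inversion Heq.
    apply (y_notin e). apply in_or_app; right.
    apply in_flat_map; exists a; split; auto.
    apply in_flat_map; exists b; split; auto.
Qed.

Lemma uniq_main : forall N H1 H2, length H1 + length H2 <= N ->
  fin_index_set H1 -> fin_index_set H2 -> fsum op y H1 = fsum op y H2 -> H1 = H2.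
Proof.
  induction N; intros H1 H2 Hlen F1 F2 Heq.
  - destruct F1 as [Hne _]; destruct H1; simpl in Hlen; [congruence|lia].
  - destruct F1 as [Hne1 Hs1], F2 as [Hne2 Hs2].
    destruct (exists_last Hne1) as [H1' [e1 E1]].
    destruct (exists_last Hne2) as [H2' [e2 E2]]. subst H1 H2.
    destruct (sorted_last _ _ Hs1) as [Hs1' HF1].
    destruct (sorted_last _ _ Hs2) as [Hs2' HF2].
    rewrite !length_app in Hlen; simpl in Hlen.
    destruct (lt_eq_lt_dec e1 e2) as [[Hlt|Heq12]|Hlt].
    + exfalso. apply (lt_case (H1' ++ [e1]) H2' e2); auto.
      * split; auto.
      * apply Forall_app; split.
        -- eapply Forall_impl; [|exact HF1]; simpl; intros; lia.
        -- constructor; auto.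
    + subst e2.
      destruct H1' as [|h1 t1]; destruct H2' as [|h2 t2]; auto.
      * exfalso. destruct (sum_in_SS (h2 :: t2) e1 Hs2' ltac:(discriminate) HF2) as [a [Ha _]].
        rewrite (fsum_app_last _ _ _ _ e1 Ha) in Heq. simpl in Heq. inversion Heq.
        apply (noA a (y e1)); auto.
      * exfalso. destruct (sum_in_SS (h1 :: t1) e1 Hs1' ltac:(discriminate) HF1) as [a [Ha _]].
        rewrite (fsum_app_last _ _ _ _ e1 Ha) in Heq. simpl in Heq. inversion Heq.
        apply (noA a (y e1)); auto.
      * destruct (sum_in_SS (h1 :: t1) e1 Hs1' ltac:(discriminate) HF1) as [a1 [Ha1 _]].
        destruct (sum_in_SS (h2 :: t2) e1 Hs2' ltac:(discriminate) HF2) as [a2 [Ha2 _]].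
        rewrite (fsum_app_last _ _ _ _ e1 Ha1), (fsum_app_last _ _ _ _ e1 Ha2) in Heq.
        inversion Heq as [Heq'].
        assert (a1 = a2) by (apply (Hrc (y e1) _ a1 a2 eq_refl); auto).
        subst a2.
        assert (h1 :: t1 = h2 :: t2) as ->; [|reflexivity].
        apply IHN.
        -- simpl in *; lia.
        -- split; [discriminate|auto].
        -- split; [discriminate|auto].
        -- congruence.
    + exfalso. apply (lt_case (H2' ++ [e2]) H1' e1); auto.
      * split; auto.
      * apply Forall_app; split.
        -- eapply Forall_impl; [|exact HF2]; simpl; intros; lia.
        -- constructor; auto.
Qed.

Lemma construction : sum_subsystem op x y /\ uniqueness_of_finite_sums op y.
Proof.
  split.
  - exists (fun n => seq (kk n) (S (nn n))). split; [|split].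
    + intros n; split; [simpl; discriminate|apply seq_sorted].
    + intros n. rewrite seq_S, last_last, kk_S. simpl. lia.
    + intros n. apply isum_fsum.
  - intros H1 H2 F1 F2 Hne Heq. apply Hne.
    apply (uniq_main (length H1 + length H2)); auto.
Qed.

End Constr.

Theorem theorem2p4 (T : Type) (op : T -> T -> T) :
  associative op -> infinite_type T -> no_idempotent op ->
  left_weakly_cancellative op -> right_cancellative op ->
  forall x : nat -> T, exists y : nat -> T,
    sum_subsystem op x y /\ uniqueness_of_finite_sums op y.
Proof.
  intros Hassoc _ Hnoid Hlwc0 Hrc x.
  set (lwc := fun a b => proj1_sig (constructive_indefinite_description _ (Hlwc0 a b))).
  assert (Hlwc : forall a b z, op a z = b -> In z (lwc a b)).
  { intros a b z E. unfold lwc.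
    destruct (constructive_indefinite_description _ (Hlwc0 a b)) as [l Hl]; simpl; auto. }
  set (ch := fun k L => proj1_sig (constructive_indefinite_description _
                 (ch_exists T op x lwc Hassoc Hnoid Hrc Hlwc k L))).
  assert (Hch : forall k L, ~ In (isum T op x k (ch k L)) L).
  { intros k L. unfold ch.
    destruct (constructive_indefinite_description _ _) as [n Hn]; simpl; auto. }
  eexists. exact (construction T op x lwc ch Hassoc Hnoid Hrc Hlwc Hch).
Qed.
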